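(* Let $F$ be a minimally unsatisfiable clause-set and $\vec{v} = (v_1,\dots,v_n)$, $n\ge 2$, a singular tuple for $F$ with singularity-degree tuple $(m_1,\dots,m_n)$. Let $i \in \{1,\dots,n-1\}$, let $\pi$ be the permutation of $\{1,\dots,n\}$ exchanging $i$ and $i+1$ and fixing all other elements, and let $\vec{v}' := (v_{\pi(1)},\dots,v_{\pi(n)})$. When $\vec{v}'$ is a singular tuple for $F$ (i.e., $\pi$ is singularity-preserving), let $(m_1',\dots,m_n')$ be its singularity-degree tuple. Then: 1. If $\pi$ is singularity-preserving, then $m_j' = m_j$ for all $j \in \{1,\dots,n\}\setminus\{i,i+1\}$. 2. Assume $m_i \ge 2$. Then (a) $\pi$ is singularity-preserving; (b) $m_i' \le m_{i+1}+1$; (c) $m_{i+1}' \ge m_i - 1$; (d) if $m_{i+1}=1$ then $m_i' = 1$; (e) if $m_{i+1}\ge 2$ then $m_{i+1}' \ge 2$. 3. Assume $m_i = 1$. (a) If $m_{i+1} = 1$, then $\pi$ is singularity-preserving, $m_{i+1}' = 1$ and $m_i' \in \{1,2\}$. (b) If $m_{i+1} \ge 2$, then $\pi$ is singularity-preserving if and only if $v_{i+1}$ is singular for $\mathrm{DP}_{v_1,\dots,v_{i-1}}(F)$; and if $\pi$ is singularity-preserving then $m_i' \ge 2$.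
   Context: Literals are variables $v$ and complements $\overline{v}$; a clause is a finite set of literals with no complementary pair; a clause-set is a finite set of clauses; $\mathrm{ldeg}_F(x)$ is the number of clauses of $F$ containing literal $x$, and $\mathrm{vdeg}_F(v)=\mathrm{ldeg}_F(v)+\mathrm{ldeg}_F(\overline{v})$. $\mathrm{DP}_v(F) := \{C \in F : v \notin \mathrm{var}(C)\} \cup \{(C \cup D)\setminus\{v,\overline{v}\} : C, D \in F,\ C \cap \overline{D} = \{v\}\}$, and $\mathrm{DP}_{v_1,\dots,v_k}(F)$ is the result of applying $\mathrm{DP}_{v_1},\dots,\mathrm{DP}_{v_k}$ in this order ($F$ itself if $k=0$). A variable $v$ is singular for $F$ if $\min(\mathrm{ldeg}_F(v),\mathrm{ldeg}_F(\overline{v}))=1$, and $m$-singular ($m\ge1$) if moreover $\mathrm{vdeg}_F(v)-1=m$. For a minimally unsatisfiable $F$, a tuple $(v_1,\dots,v_n)$ is a singular tuple for $F$ if each $v_i$ is singular for $\mathrm{DP}_{v_1,\dots,v_{i-1}}(F)$; its singularity-degree tuple is $(m_1,\dots,m_n)$ where $v_i$ is $m_i$-singular for $\mathrm{DP}_{v_1,\dots,v_{i-1}}(F)$. A permutation $\pi$ is singularity-preserving for $F$ and $(v_1,\dots,v_n)$ if $(v_{\pi(1)},\dots,v_{\pi(n)})$ is also a singular tuple for $F$. *)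

(* Defs.v *)
From mathcomp Require Import all_boot.
From mathcomp Require Import finmap.
Set Implicit Arguments. Unset Strict Implicit. Unset Printing Implicit Defensive.
Local Open Scope fset_scope.

(* Variables are natural numbers; a literal is (variable, polarity):
   (v, true) is the positive literal v, (v, false) is its complement. *)
Definition var := nat.
Definition lit := (nat * bool)%type.
Definition pos (v : var) : lit := (v, true).
Definition compl (x : lit) : lit := (x.1, ~~ x.2).

Definition clause := {fset lit}.
Definition cls := {fset clause}.

Definition is_clause (C : clause) : bool := [forall x : C, compl (val x) \notin C].
Definition is_clause_set (F : cls) : bool := [forall C : F, is_clause (val C)].

Definition vars_of (C : clause) : {fset var} := [fset x.1 | x in C].
Definition compl_clause (C : clause) : clause := [fset compl x | x in C].

Definition sat_clause (f : var -> bool) (C : clause) : Prop :=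
  exists2 x, x \in C & f x.1 = x.2.
Definition satisfiable (F : cls) : Prop :=
  exists f : var -> bool, forall C, C \in F -> sat_clause f C.

Definition MU (F : cls) : Prop :=
  is_clause_set F /\ ~ satisfiable F /\
  (forall G : cls, G `<` F -> satisfiable G).

Definition ldeg (F : cls) (x : lit) : nat := #|` [fset C in F | x \in C]|.
Definition vdeg (F : cls) (v : var) : nat := ldeg F (pos v) + ldeg F (compl (pos v)).

Definition DP (v : var) (F : cls) : cls :=
  [fset C in F | v \notin vars_of C] `|`
  [fset ((C `|` D) `\` [fset pos v; compl (pos v)]) | C in F, D in F
     & (C `&` compl_clause D == [fset pos v])].

(* DP_{v_1,...,v_k}(F), applied in this order *)
Definition DPs (s : seq var) (F : cls) : cls := foldl (fun G v => DP v G) F s.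

Definition singular (F : cls) (v : var) : bool :=
  minn (ldeg F (pos v)) (ldeg F (compl (pos v))) == 1.
Definition m_singular (F : cls) (m : nat) (v : var) : bool :=
  (0 < m) && singular F v && (vdeg F v - 1 == m).

(* singular tuples (0-based indices) *)
Definition singular_tuple (F : cls) (s : seq var) : Prop :=
  forall i, i < size s -> singular (DPs (take i s) F) (nth 0 s i).

(* singularity-degree tuple: the j-th entry is the m with v_j m-singular
   for DP_{v_1..v_{j-1}}(F) *)
Definition sdeg (F : cls) (s : seq var) (j : nat) : nat :=
  vdeg (DPs (take j s) F) (nth 0 s j) - 1.

(* the transposition of i and i+1 on indices (0-based) *)
Definition swap_idx (i j : nat) : nat :=
  if j == i then i.+1 else if j == i.+1 then i else j.

Definition permute (pi : nat -> nat) (s : seq var) : seq var :=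
  mkseq (fun j => nth 0 s (pi j)) (size s).

Definition sing_preserving (F : cls) (s : seq var) (pi : nat -> nat) : Prop :=
  singular_tuple F (permute pi s).

(* Main.v *)
Require Import Defs.
From mathcomp Require Import all_boot finmap zify.
Set Implicit Arguments. Unset Strict Implicit. Unset Printing Implicit Defensive.
Local Open Scope fset_scope.
Lemma memF (G : cls) (P : pred clause) E : (E \in [fset C in G | P C]) = (E \in G) && P E.
Proof. by rewrite !inE. Qed.
Lemma varsP (C : clause) v : reflect (pos v \in C \/ (v,false) \in C) (v \in vars_of C).
Proof. apply: (iffP idP).
- case/imfsetP. move=> [w b] /= H ->. case: b H => H. left; exact H. right; exact H.
- case=> H; apply/imfsetP. by exists (pos v). by exists (v,false).
Qed.
Lemma complK : involutive compl. Proof. by case=> v b; rewrite /compl /= negbK. Qed.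
Lemma in_compl_clause (D : clause) x : (x \in compl_clause D) = (compl x \in D).
Proof. apply/idP/idP.
- by case/imfsetP=> y /= H ->; rewrite complK.
- by move=> H; apply/imfsetP; exists (compl x) => //; rewrite complK. Qed.

Definition is_clauseP (C : clause) :
  reflect (forall l, l \in C -> compl l \notin C) (is_clause C).
Proof. apply: (iffP forallP) => [H l lC | H [l lC]] /=.
- exact: (H [` lC]).
- exact: H. Qed.

Lemma is_clause_setP (F : cls) : reflect (forall C, C \in F -> is_clause C) (is_clause_set F).
Proof. apply: (iffP forallP) => [H C CF | H [C CF]] /=.
- exact: (H [` CF]).
- exact: H. Qed.

Lemma lit_cases (l x : lit) : l.1 = x.1 -> l = x \/ l = compl x.
Proof. case: l x => w b [u c] /= ->. case: b c => -[]; by [left|right]. Qed.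

Lemma compl_neq (x : lit) : (compl x == x) = false.
Proof. case: x => v b; rewrite /compl /= xpair_eqE eqxx /=. by case: b. Qed.

Lemma compl_inj : injective compl. Proof. exact: (can_inj complK). Qed.

Lemma varsxP (C : clause) (x : lit) : reflect (x \in C \/ compl x \in C) (x.1 \in vars_of C).
Proof. case: x => v [] /=; apply: (iffP (varsP _ _)) => //; case; by [left|right]. Qed.

Lemma DP_inv (H : cls) v R : R \in DP v H ->
  (R \in H /\ v \notin vars_of R) \/
  exists C D, [/\ C \in H, D \in H, pos v \in C, compl (pos v) \in D &
                  C `&` compl_clause D = [fset pos v] /\
                  R = (C `|` D) `\` [fset pos v; compl (pos v)]].
Proof.
rewrite /DP !inE => /orP [/andP [H1 H2]|]; first by left.
case/imfset2P => C CH [D]; rewrite !inE /= => /andP [DH /eqP E] ->.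
right; exists C, D; split => //.
- have : pos v \in [fset pos v] by rewrite inE.
  by rewrite -E inE => /andP [].
- have : pos v \in [fset pos v] by rewrite inE.
  by rewrite -E inE in_compl_clause => /andP [].
Qed.

Lemma DP_kept (H : cls) v C : C \in H -> v \notin vars_of C -> C \in DP v H.
Proof. by move=> H1 H2; rewrite /DP !inE H1 H2. Qed.

Lemma clash_of_clause (C D : clause) v :
  is_clause C -> is_clause D -> pos v \in C -> compl (pos v) \in D ->
  is_clause ((C `|` D) `\` [fset pos v; compl (pos v)]) ->
  C `&` compl_clause D = [fset pos v].
Proof.
move=> /is_clauseP cC /is_clauseP cD pC nD /is_clauseP cR.
apply/fsetP => l; rewrite !inE in_compl_clause.
have [->|lp] := eqVneq l (pos v); first by rewrite pC nD.
apply/negbTE/negP => /andP [lC lD].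
have ln : l != compl (pos v).
  by apply/eqP => E; move: (cC _ pC); rewrite -E lC.
have cl1 : compl l != pos v.
  by apply/eqP => E; move: ln; rewrite -E complK eqxx.
have cl2 : compl l != compl (pos v).
  by apply/eqP => /compl_inj E; move: lp; rewrite E eqxx.
have := cR l; rewrite !inE (negbTE lp) (negbTE ln) lC lD (negbTE cl1) (negbTE cl2) /= orbT.
by move=> /(_ isT).
Qed.

Lemma DP_res (H : cls) v C D : is_clause_set H -> C \in H -> D \in H ->
  pos v \in C -> compl (pos v) \in D ->
  is_clause ((C `|` D) `\` [fset pos v; compl (pos v)]) ->
  (C `|` D) `\` [fset pos v; compl (pos v)] \in DP v H.
Proof.
move=> /is_clause_setP cH CH DH pC nD cR.
rewrite /DP inE; apply/orP; right.
apply/imfset2P; exists C => //; exists D => //.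
by rewrite !inE DH /= (clash_of_clause (cH _ CH) (cH _ DH) pC nD cR) eqxx.
Qed.

Lemma DP_novar (H : cls) v R : R \in DP v H -> v \notin vars_of R.
Proof.
case/DP_inv => [[//]|[C [D [_ _ _ _ [_ ->]]]]].
apply/negP => /varsP; rewrite !inE; case=> /andP [] /negP; rewrite ?eqxx ?orbT //.
Qed.

Lemma DP_clause_set (H : cls) v : is_clause_set H -> is_clause_set (DP v H).
Proof.
move=> cH0; have /is_clause_setP cH := cH0.
apply/is_clause_setP => R /DP_inv [[RH _]|[C [D [CH DH pC nD [E ->]]]]]; first exact: cH.
have /is_clauseP cC := cH _ CH; have /is_clauseP cD := cH _ DH.
apply/is_clauseP => l; rewrite !inE => /andP [lA lCD]; apply/negP => /andP [clA clCD].
case/orP: lCD => lX; case/orP: clCD => clX.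
- by move: (cC _ lX); rewrite clX.
- have : l \in C `&` compl_clause D by rewrite inE lX in_compl_clause.
  by rewrite E inE => /eqP El; move: lA; rewrite El eqxx.
- have : compl l \in C `&` compl_clause D by rewrite inE clX in_compl_clause complK.
  by rewrite E inE => /eqP El; move: lA; rewrite -El complK eqxx orbT.
- by move: (cD _ lX); rewrite clX.
Qed.

Lemma litsE (x : lit) : [fset pos x.1; compl (pos x.1)] = [fset x; compl x].
Proof. case: x => v [] //=. by rewrite fsetUC. Qed.

Lemma DP_res_lit (H : cls) (x : lit) C D : is_clause_set H -> C \in H -> D \in H ->
  x \in C -> compl x \in D ->
  is_clause ((C `|` D) `\` [fset x; compl x]) ->
  (C `|` D) `\` [fset x; compl x] \in DP x.1 H.
Proof.
case: x => v [] cH CH DH xC xD cR.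
- exact: DP_res.
- have E := litsE (v,false); rewrite /= in E.
  rewrite -E [C `|` D]fsetUC. apply: DP_res => //. by rewrite fsetUC E.
Qed.

Lemma DP_inv_lit (H : cls) (x : lit) R : R \in DP x.1 H ->
  (R \in H /\ x.1 \notin vars_of R) \/
  exists C D, [/\ C \in H, D \in H, x \in C, compl x \in D &
                  R = (C `|` D) `\` [fset x; compl x]].
Proof.
case/DP_inv => [|[C [D [CH DH pC nD [_ ->]]]]]; first by left.
right; move: pC nD; case: x => v [] pC nD.
- by exists C, D.
- have E := litsE (v,false); rewrite /= in E.
  exists D, C; split => //. by rewrite -E [D `|` C]fsetUC.
Qed.

Ltac brute := repeat match goal with |- context [?x \in ?S] => case: (x \in S) end; done.
Ltac usefacts := repeat match goal with
  | H : (?x \in ?S) = false |- context [?x \in ?S] => rewrite H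
  | H : is_true (?x \in ?S) |- context [?x \in ?S] => rewrite H
  end.
Ltac lsimp ab ba := rewrite ?inE /= ?xpair_eqE ?eqxx ?ab ?ba /= ; usefacts; rewrite /=.
Ltac bsolve ab ba := lsimp ab ba; brute.
Ltac lsplit a b := let w := fresh "w" in let c := fresh "c" in let wa := fresh "wa" in let wb := fresh "wb" in
  case=> w c; (have [->|wa] := eqVneq w a); [case: c | (have [->|wb] := eqVneq w b); [case: c | rewrite ?inE /= ?xpair_eqE ?(negbTE wa) ?(negbTE wb) /=]].

Lemma clause_sub (A B : clause) : A `<=` B -> is_clause B -> is_clause A.
Proof.
move=> /fsubsetP AB /is_clauseP cB; apply/is_clauseP => l lA.
by apply/negP => /AB; apply/negP; apply: cB; apply: AB.
Qed.

Lemma clause_add (R : clause) l : is_clause R -> l.1 \notin vars_of R -> is_clause (l |` R).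
Proof.
move=> /is_clauseP cR lR; apply/is_clauseP => l'; rewrite !inE.
case/orP => [/eqP ->|l'R]; apply/negP; case/orP.
- by rewrite compl_neq.
- by move=> H; move/negP: lR; apply; apply/varsxP; right.
- move=> /eqP E; move/negP: lR; apply. 
  have -> : l.1 = l'.1 by rewrite -E. by apply/varsxP; left.
- by move: (cR _ l'R) => /negP.
Qed.

Lemma novarE (P : clause) v : v \notin vars_of P -> (pos v \in P) = false /\ ((v,false) \in P) = false.
Proof. move=> H; split; apply/negP => H'; move/negP: H; apply; apply/varsP; by [left|right]. Qed.

Lemma varE (P : clause) v : (pos v \in P) = false -> ((v,false) \in P) = false -> v \notin vars_of P.
Proof. by move=> H1 H2; apply/negP => /varsP; rewrite H1 H2; case. Qed.

Lemma clause_compl (P : clause) x : is_clause P -> x \in P -> (compl x \in P) = false.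
Proof. by move=> /is_clauseP cP xP; apply/negbTE/cP. Qed.

Lemma ldeg2 (H : cls) z C D : C \in H -> D \in H -> C != D -> z \in C -> z \in D -> 1 < ldeg H z.
Proof.
move=> CH DH CD zC zD; rewrite /ldeg.
have <- : #|` [fset C; D]| = 2 by rewrite cardfs2 CD.
apply: fsubset_leq_card; apply/fsubsetP => E; rewrite !inE.
by case/orP => /eqP ->; rewrite ?CH ?DH ?zC ?zD.
Qed.

Lemma sing_le1 (H : cls) v : singular H v -> ldeg H (pos v) <= 1 \/ ldeg H (compl (pos v)) <= 1.
Proof. rewrite /singular /minn; case: ifP => _ /eqP ->; by [left|right]. Qed.

Lemma DP_comm_sub (H : cls) a b R : is_clause_set H -> a != b -> singular H b ->
  R \in DP a (DP b H) -> R \in DP b (DP a H).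
Proof.
move=> cH ab sb RD.
have ab' : (a == b) = false := negbTE ab.
have ba' : (b == a) = false by rewrite eq_sym.
have cHa := DP_clause_set a cH; have cHb := DP_clause_set b cH.
have cHab := DP_clause_set a cHb.
have /is_clause_setP cH' := cH.
have cR : is_clause R := (elimT (is_clause_setP _) cHab) R RD.
have two : forall C1 C2 D1 D2, C1 \in H -> C2 \in H -> D1 \in H -> D2 \in H ->
   C1 != C2 -> D1 != D2 -> pos b \in C1 -> pos b \in C2 ->
   compl (pos b) \in D1 -> compl (pos b) \in D2 -> False.
  move=> C1 C2 D1 D2 h1 h2 h3 h4 h5 h6 h7 h8 h9 h10.
  case: (sing_le1 sb); rewrite leqNgt; move/negP; apply.
  exact: (ldeg2 h1 h2). exact: (ldeg2 h3 h4).
have [Ra1 Ra2] := novarE (DP_novar RD).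
have fin : forall X Y, X \in DP a H -> Y \in DP a H -> pos b \in X -> compl (pos b) \in Y ->
    R = (X `|` Y) `\` [fset pos b; compl (pos b)] -> R \in DP b (DP a H).
  by move=> X Y XH YH pX nY E; rewrite E; apply: DP_res => //; rewrite -E.
have mid : forall U V l, U \in H -> V \in H -> pos a \in U -> compl (pos a) \in V -> l.1 = b ->
    (U `|` V) `\` [fset pos a; compl (pos a)] `<=` l |` R ->
    (U `|` V) `\` [fset pos a; compl (pos a)] \in DP a H.
  move=> U V l UH VH pU nV lb sub; apply: DP_res => //.
  apply: clause_sub sub _; apply: clause_add => //; rewrite lb.
  case/DP_inv: RD => [[/DP_novar //]|[P [Q [PH QH _ _ [_ ->]]]]].
  have [P1 P2] := novarE (DP_novar PH); have [Q1 Q2] := novarE (DP_novar QH).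
  apply: varE; unfold pos, compl in *; simpl in *; bsolve ab' ba'.
case/DP_inv: RD => [[RbH _] | [P [Q [PH QH pP nQ [_ ER]]]]].
- case/DP_inv: RbH => [[RH Rb]|[C [D [CH DH pC nD [_ ER]]]]].
  + by apply: DP_kept => //; apply: DP_kept => //; apply: varE.
  + subst R; apply: (fin C D) => //; apply: DP_kept => //; apply: varE;
    unfold pos, compl in *; simpl in *; move: Ra1 Ra2; bsolve ab' ba'.
-   have /(is_clause_setP _) cQ := cHb. have {cQ}cQ := cQ Q QH.
  have /(is_clause_setP _) cP := cHb. have {cP}cP := cP P PH.
  have Pa := clause_compl cP pP. have Qa := clause_compl cQ nQ. rewrite complK in Qa.
  have [Pb1 Pb2] := novarE (DP_novar PH); have [Qb1 Qb2] := novarE (DP_novar QH).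
  unfold pos, compl in *; simpl in *.
  case/DP_inv: PH => [[PH _]|[C1 [D1 [C1H D1H pC1 nD1 [_ EP]]]]];
  case/DP_inv: QH => [[QH _]|[C2 [D2 [C2H D2H pC2 nD2 [_ EQ]]]]].
  + apply: DP_kept; first by rewrite ER; apply: DP_res => //; rewrite -ER.
    apply: varE; subst R; bsolve ab' ba'.
  + subst Q.
    have C2b := clause_compl (cH' _ C2H) pC2. have D2b := clause_compl (cH' _ D2H) nD2.
    simpl in C2b, D2b.
    have Ca : ((a,true) \in C2) = false by move: Qa; bsolve ab' ba'.
    have Da : ((a,true) \in D2) = false by move: Qa; bsolve ab' ba'.
    have both : ((a,false) \in C2) -> ((a,false) \in D2) -> R \in DP b (DP a H).
      move=> h1 h2.
      apply: (fin ((P `|` C2) `\` [fset (a,true); (a,false)]) ((P `|` D2) `\` [fset (a,true); (a,false)])).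
      * apply: (mid _ _ (b,true)) => //; subst R; apply/fsubsetP; lsplit a b; bsolve ab' ba'.
      * apply: (mid _ _ (b,false)) => //; subst R; apply/fsubsetP; lsplit a b; bsolve ab' ba'.
      * bsolve ab' ba'.
      * bsolve ab' ba'.
      * subst R; apply/fsetP; lsplit a b; bsolve ab' ba'.
    have : ((a,false) \in C2) || ((a,false) \in D2) by move: nQ; bsolve ab' ba'.
    case/orP => h1.
    * case h2 : ((a,false) \in D2); first exact: both.
      apply: (fin ((P `|` C2) `\` [fset (a,true); (a,false)]) D2).
      -- apply: (mid _ _ (b,true)) => //; subst R; apply/fsubsetP; lsplit a b; bsolve ab' ba'.
      -- by apply: DP_kept => //; apply: varE.
      -- bsolve ab' ba'.
      -- done.
      -- subst R; apply/fsetP; lsplit a b; bsolve ab' ba'.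
    * case h2 : ((a,false) \in C2); first exact: both.
      apply: (fin C2 ((P `|` D2) `\` [fset (a,true); (a,false)])).
      -- by apply: DP_kept => //; apply: varE.
      -- apply: (mid _ _ (b,false)) => //; subst R; apply/fsubsetP; lsplit a b; bsolve ab' ba'.
      -- done.
      -- bsolve ab' ba'.
      -- subst R; apply/fsetP; lsplit a b; bsolve ab' ba'.
  + subst P.
    have C1b := clause_compl (cH' _ C1H) pC1. have D1b := clause_compl (cH' _ D1H) nD1.
    simpl in C1b, D1b.
    have Ca : ((a,false) \in C1) = false by move: Pa; bsolve ab' ba'.
    have Da : ((a,false) \in D1) = false by move: Pa; bsolve ab' ba'.
    have both : ((a,true) \in C1) -> ((a,true) \in D1) -> R \in DP b (DP a H).
      move=> h1 h2.
      apply: (fin ((C1 `|` Q) `\` [fset (a,true); (a,false)]) ((D1 `|` Q) `\` [fset (a,true); (a,false)])).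
      * apply: (mid _ _ (b,true)) => //; subst R; apply/fsubsetP; lsplit a b; bsolve ab' ba'.
      * apply: (mid _ _ (b,false)) => //; subst R; apply/fsubsetP; lsplit a b; bsolve ab' ba'.
      * bsolve ab' ba'.
      * bsolve ab' ba'.
      * subst R; apply/fsetP; lsplit a b; bsolve ab' ba'.
    have : ((a,true) \in C1) || ((a,true) \in D1) by move: pP; bsolve ab' ba'.
    case/orP => h1.
    * case h2 : ((a,true) \in D1); first exact: both.
      apply: (fin ((C1 `|` Q) `\` [fset (a,true); (a,false)]) D1).
      -- apply: (mid _ _ (b,true)) => //; subst R; apply/fsubsetP; lsplit a b; bsolve ab' ba'.
      -- by apply: DP_kept => //; apply: varE.
      -- bsolve ab' ba'.
      -- done.
      -- subst R; apply/fsetP; lsplit a b; bsolve ab' ba'.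
    * case h2 : ((a,true) \in C1); first exact: both.
      apply: (fin C1 ((D1 `|` Q) `\` [fset (a,true); (a,false)])).
      -- by apply: DP_kept => //; apply: varE.
      -- apply: (mid _ _ (b,false)) => //; subst R; apply/fsubsetP; lsplit a b; bsolve ab' ba'.
      -- done.
      -- bsolve ab' ba'.
      -- subst R; apply/fsetP; lsplit a b; bsolve ab' ba'.
  + subst P Q.
    have C1b := clause_compl (cH' _ C1H) pC1. have D1b := clause_compl (cH' _ D1H) nD1.
    have C2b := clause_compl (cH' _ C2H) pC2. have D2b := clause_compl (cH' _ D2H) nD2.
    simpl in C1b, D1b, C2b, D2b.
    have C1a : ((a,false) \in C1) = false by move: Pa; bsolve ab' ba'.
    have D1a : ((a,false) \in D1) = false by move: Pa; bsolve ab' ba'.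
    have C2a : ((a,true) \in C2) = false by move: Qa; bsolve ab' ba'.
    have D2a : ((a,true) \in D2) = false by move: Qa; bsolve ab' ba'.
    have sub1 : ((a,true) \in C1) -> ((a,false) \in C2) -> R \in DP b (DP a H).
      move=> h1 h2.
      have [eD|nD] := eqVneq D1 D2; last first.
        exfalso; apply: (two C1 C2 D1 D2) => //.
        by apply/eqP => E; move: C2a; rewrite -E h1.
      subst D2.
      apply: (fin ((C1 `|` C2) `\` [fset (a,true); (a,false)]) D1).
      -- apply: (mid _ _ (b,true)) => //; subst R; apply/fsubsetP; lsplit a b; bsolve ab' ba'.
      -- by apply: DP_kept => //; apply: varE.
      -- bsolve ab' ba'.
      -- done.
      -- subst R; apply/fsetP; lsplit a b; bsolve ab' ba'.
    have sub2 : ((a,true) \in D1) -> ((a,false) \in D2) -> R \in DP b (DP a H).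
      move=> h1 h2.
      have [eC|nC] := eqVneq C1 C2; last first.
        exfalso; apply: (two C1 C2 D1 D2) => //.
        by apply/eqP => E; move: D2a; rewrite -E h1.
      subst C2.
      apply: (fin C1 ((D1 `|` D2) `\` [fset (a,true); (a,false)])).
      -- by apply: DP_kept => //; apply: varE.
      -- apply: (mid _ _ (b,false)) => //; subst R; apply/fsubsetP; lsplit a b; bsolve ab' ba'.
      -- done.
      -- bsolve ab' ba'.
      -- subst R; apply/fsetP; lsplit a b; bsolve ab' ba'.
    have : ((a,true) \in C1) || ((a,true) \in D1) by move: pP; bsolve ab' ba'.
    have : ((a,false) \in C2) || ((a,false) \in D2) by move: nQ; bsolve ab' ba'.
    case/orP => h2; case/orP => h1.
    * exact: sub1.
    * case h3 : ((a,true) \in C1); first exact: sub1.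
      case h4 : ((a,false) \in D2); first exact: sub2.
      exfalso; apply: (two C1 C2 D1 D2) => //.
      by apply/eqP => E; move: h2; rewrite -E C1a.
      by apply/eqP => E; move: h1; rewrite E D2a.
    * case h3 : ((a,true) \in D1); first exact: sub2.
      case h4 : ((a,false) \in C2); first exact: sub1.
      exfalso; apply: (two C1 C2 D1 D2) => //.
      by apply/eqP => E; move: h1; rewrite E C2a.
      by apply/eqP => E; move: h2; rewrite -E D1a.
    * exact: sub2.
Qed.

Lemma DP_comm (H : cls) a b : is_clause_set H -> a != b -> singular H a -> singular H b ->
  DP a (DP b H) = DP b (DP a H).
Proof.
move=> cH ab sa sb; apply/fsetP => R; apply/idP/idP; first exact: DP_comm_sub.
apply: DP_comm_sub => //; by rewrite eq_sym.
Qed.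

Definition upd (f : var -> bool) v bv := fun w => if w == v then bv else f w.

Lemma sat_upd f v bv C : sat_clause f C -> v \notin vars_of C -> sat_clause (upd f v bv) C.
Proof.
case=> l lC fl vC; exists l => //; rewrite /upd.
case: ifP => [/eqP E|//]; move/negP: vC; case; rewrite -E.
by apply/imfsetP; exists l.
Qed.

Lemma sat_sub f (G G' : cls) : G' `<=` G -> (forall C, C \in G -> sat_clause f C) ->
  forall C, C \in G' -> sat_clause f C.
Proof. by move=> /fsubsetP s H C /s; apply: H. Qed.

Lemma crit (G : cls) E : MU G -> E \in G ->
  exists f, (forall C, C \in G -> C != E -> sat_clause f C) /\ (forall l, l \in E -> f l.1 != l.2).
Proof.
move=> [cG [uG mG]] EG.
have [f Hf] := mG _ (fproperD1 EG).
have H1 : forall C, C \in G -> C != E -> sat_clause f C.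
  by move=> C CG CE; apply: Hf; rewrite !inE CE CG.
exists f; split => // l lE; apply/negP => /eqP fl.
apply: uG; exists f => C CG.
case: (eqVneq C E) => [->|CE]; last exact: H1.
by exists l.
Qed.

Lemma nb_eq (b c : bool) : b != c -> b = ~~ c. Proof. by case: b; case: c. Qed.

Lemma lit_var_cases (l x : lit) : l.1 = x.1 -> (l == x) || (l == compl x).
Proof. by case/lit_cases => ->; rewrite eqxx ?orbT. Qed.

Lemma no_pure (G : cls) z : MU G -> 0 < ldeg G z -> 0 < ldeg G (compl z).
Proof.
move=> MG; rewrite /ldeg cardfs_gt0 => /fset0Pn [C]; rewrite !inE => /andP [CG zC].
rewrite lt0n; apply/negP => /eqP /cardfs0_eq H0.
have Hn : ~ exists D, D \in [fset C in G | compl z \in C] by rewrite H0; case.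
apply: (proj1 (proj2 MG)).
have [f [Hf _]] := crit MG CG.
exists (upd f z.1 z.2) => D DG.
case: (eqVneq D C) => [->|DC]; first by exists z => //; rewrite /upd eqxx.
have [l lD fl] := Hf _ DG DC.
case: (eqVneq l.1 z.1) => [lz|lz].
- case/orP: (lit_var_cases lz) => /eqP El.
  + by exists z; rewrite -?El ?/upd ?eqxx.
  + by exfalso; apply: Hn; exists D; rewrite !inE DG -El.
- by exists l => //; rewrite /upd (negbTE lz).
Qed.

Lemma unique1 (G : cls) x : ldeg G x = 1 ->
  exists C0, [/\ C0 \in G, x \in C0 & forall E, E \in G -> x \in E -> E = C0].
Proof.
rewrite /ldeg => /eqP /cardfs1P [C0 E].
have : C0 \in [fset C in G | x \in C] by rewrite E inE.
rewrite !inE => /andP [C0G xC0]; exists C0; split => // D DG xD.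
have : D \in [fset C in G | x \in C] by rewrite !inE DG xD.
by rewrite E inE => /eqP.
Qed.

Lemma crit_x (G : cls) x C0 D : MU G -> C0 \in G -> x \in C0 ->
  (forall E, E \in G -> x \in E -> E = C0) -> D \in G -> compl x \in D ->
  exists f, [/\ (forall C, C \in G -> C != D -> sat_clause f C),
     (forall l, l \in D -> f l.1 != l.2),
     (forall l, l \in C0 -> l != x -> f l.1 != l.2) & f x.1 = x.2].
Proof.
move=> MG C0G xC0 uC0 DG xD.
have [f [Hf Hn]] := crit MG DG.
have fx : f x.1 = x.2 by move: (Hn _ xD); case: x {uC0 xC0 xD} => v [] /=; case: (f v).
exists f; split => // l lC0 lx; apply/negP => /eqP fl.
apply: (proj1 (proj2 MG)); exists (upd f x.1 (~~ x.2)) => C CG.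
case: (eqVneq C D) => [->|CD]; first by exists (compl x) => //; rewrite /upd eqxx.
have [l' l'C fl'] := Hf _ CG CD.
case: (eqVneq l'.1 x.1) => [lz|lz]; last by exists l' => //; rewrite /upd (negbTE lz).
case/orP: (lit_var_cases lz) => /eqP El'.
- have xC : x \in C by rewrite -El'.
  have eC := uC0 _ CG xC; subst C.
  have lx1 : l.1 != x.1.
    apply/negP => /eqP /lit_var_cases /orP [/eqP|/eqP] El; first by move/eqP: lx.
    have /is_clauseP cC0 := elimT (is_clause_setP _) (proj1 MG) _ C0G.
    by move: (cC0 _ xC0); rewrite -El lC0.
  by exists l => //; rewrite /upd (negbTE lx1).
- by move: fl'; rewrite El' fx /=; case: (x.2).
Qed.

Lemma F1 (G : cls) x C0 : MU G -> C0 \in G -> x \in C0 ->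
  (forall E, E \in G -> x \in E -> E = C0) ->
  forall D w, D \in G -> compl x \in D -> w \in C0 -> compl w \in D -> w = x.
Proof.
move=> MG C0G xC0 uC0 D w DG xD wC0 wD.
have [f [_ Hn Hc fx]] := crit_x MG C0G xC0 uC0 DG xD.
apply/eqP; apply/negP => /negP wx.
move: (Hc _ wC0 wx) (Hn _ wD); case: w {wC0 wD wx} => v c /=.
by case: (f v); case: c.
Qed.

Lemma var_ne (l x : lit) : l.1 != x.1 -> (l == x) = false /\ (l == compl x) = false.
Proof.
move=> H; split; apply/negbTE; apply: contra H => /eqP ->; by [].
Qed.

Lemma res_facts (G : cls) x C0 D : MU G -> C0 \in G -> x \in C0 ->
  (forall E, E \in G -> x \in E -> E = C0) -> D \in G -> compl x \in D ->
  [/\ is_clause ((C0 `|` D) `\` [fset x; compl x]),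
      (C0 `|` D) `\` [fset x; compl x] \in DP x.1 G,
      (C0 `|` D) `\` [fset x; compl x] \notin G,
      (forall D', D' \in G -> compl x \in D' ->
          (C0 `|` D') `\` [fset x; compl x] = (C0 `|` D) `\` [fset x; compl x] -> D' = D) &
      (forall z, z.1 != x.1 -> (z \in (C0 `|` D) `\` [fset x; compl x]) = (z \in C0) || (z \in D))].
Proof.
move=> MG C0G xC0 uC0 DG xD.
have F := F1 MG C0G xC0 uC0.
have /is_clause_setP cG := proj1 MG.
have /is_clauseP cC0 := cG _ C0G; have /is_clauseP cD := cG _ DG.
have [f [Hf Hn Hc fx]] := crit_x MG C0G xC0 uC0 DG xD.
have falsR : forall D', D' \in G -> compl x \in D' -> (forall l, l \in D' -> l.1 != x.1 -> f l.1 != l.2) ->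
     forall l, l \in (C0 `|` D') `\` [fset x; compl x] -> f l.1 != l.2.
  move=> D' D'G xD' HD' l; rewrite !inE negb_or => /andP [/andP [lx lcx] /orP [lC0|lD']].
  - exact: Hc.
  - apply: HD' => //; apply/negP => /eqP /lit_var_cases; by rewrite (negbTE lx) (negbTE lcx).
have fR := falsR D DG xD (fun l lD _ => Hn l lD).
have cR : is_clause ((C0 `|` D) `\` [fset x; compl x]).
  apply/is_clauseP => l; rewrite !inE negb_or => /andP [/andP [lx lcx] lCD].
  apply/negP; rewrite negb_or => /andP [/andP [clx clcx] clCD].
  case/orP: lCD => lX; case/orP: clCD => clX.
  - by move: (cC0 _ lX); rewrite clX.
  - by move: lx; rewrite (F _ _ DG xD lX clX) eqxx.
  - have h : compl (compl l) \in D by rewrite complK.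
    by move: clx; rewrite (F _ (compl l) DG xD clX h) eqxx.
  - by move: (cD _ lX); rewrite clX.
split => //.
- exact: (DP_res_lit (proj1 MG) C0G DG xC0 xD cR).
- apply/negP => RG.
  have RD : (C0 `|` D) `\` [fset x; compl x] != D.
    apply/negP => /eqP E; move: xD; rewrite -E !inE eqxx orbT //.
  have [l lR fl] := Hf _ RG RD.
  by move: (fR _ lR); rewrite fl eqxx.
- move=> D' D'G xD' E; apply/eqP; apply/negP => /negP D'D.
  have [l lD' fl] := Hf _ D'G D'D.
  have lcx : l != compl x by apply/negP => /eqP El; move: fl; rewrite El fx /=; case: (x.2).
  have lx : l != x by apply/negP => /eqP El; have /is_clauseP cD' := cG _ D'G; move: (cD' _ lD'); rewrite El xD'.
  have : l \in (C0 `|` D') `\` [fset x; compl x] by rewrite !inE negb_or lx lcx lD' orbT.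
  by rewrite E => /fR; rewrite fl eqxx.
- move=> z zx; have [h1 h2] := var_ne zx; by rewrite !inE h1 h2.
Qed.

Lemma sing_lit (H : cls) v : singular H v -> exists x : lit, x.1 = v /\ ldeg H x = 1.
Proof.
rewrite /singular /minn; case: ifP => _ /eqP E.
- by exists (pos v).
- by exists (compl (pos v)).
Qed.

Lemma res_sat f (C D : clause) x : is_clause C -> is_clause D -> x \in C -> compl x \in D ->
  sat_clause f C -> sat_clause f D -> sat_clause f ((C `|` D) `\` [fset x; compl x]).
Proof.
move=> /is_clauseP cC /is_clauseP cD xC xD [l lC fl] [l' lD fl'].
case: (eqVneq l.1 x.1) => [lv|lv]; last first.
  have [h1 h2] := var_ne lv; by exists l; rewrite // !inE h1 h2 lC.
case: (eqVneq l'.1 x.1) => [lv'|lv']; last first.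
  have [h1 h2] := var_ne lv'; by exists l'; rewrite // !inE h1 h2 lD orbT.
exfalso.
case/orP: (lit_var_cases lv) => /eqP El; last by move: (cC _ xC); rewrite -El lC.
case/orP: (lit_var_cases lv') => /eqP El'.
  by move: (cD _ lD); rewrite El' xD.
move: fl fl'; rewrite El El' /=; by case: (f x.1); case: (x.2).
Qed.

Lemma DP_char (G : cls) x C0 E : C0 \in G -> x \in C0 ->
  (forall E, E \in G -> x \in E -> E = C0) -> E \in DP x.1 G ->
  (E \in G /\ x.1 \notin vars_of E) \/
  exists2 D, D \in G /\ compl x \in D & E = (C0 `|` D) `\` [fset x; compl x].
Proof.
move=> C0G xC0 uC0 /DP_inv_lit [|[C [D [CG DG xC xD ->]]]]; first by left.
by right; exists D => //; rewrite (uC0 _ CG xC).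
Qed.

Lemma MU_DP (G : cls) v : MU G -> singular G v -> MU (DP v G).
Proof.
move=> MG /sing_lit [x [<- /unique1 [C0 [C0G xC0 uC0]]]].
have /is_clause_setP cG := proj1 MG.
have cC0 := cG _ C0G; have /is_clauseP cC0' := cC0.
have RF := res_facts MG C0G xC0 uC0.
have DPc := DP_char C0G xC0 uC0.
have varx : forall C, C \in G -> x.1 \in vars_of C -> C = C0 \/ compl x \in C.
  by move=> C CG /varsxP [/(uC0 _ CG)|]; [left|right].
split; [exact: DP_clause_set (proj1 MG)|split].
- case=> f Hf.
  case: (boolP (has (fun l => (l != x) && (f l.1 == l.2)) (enum_fset C0))).
  + case/hasP => l lC0 /andP [lx /eqP fl].
    apply: (proj1 (proj2 MG)); exists (upd f x.1 (~~ x.2)) => C CG.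
    case: (boolP (x.1 \in vars_of C)) => [vC|nvC]; last exact: sat_upd (Hf _ (DP_kept CG nvC)) nvC.
    case: (varx _ CG vC) => [->|xC]; last by exists (compl x); rewrite // /upd eqxx.
    have lv : l.1 != x.1.
      apply/negP => /eqP /lit_var_cases /orP [/eqP E|/eqP E]; first by move/eqP: lx.
      by move: (cC0' _ xC0); rewrite -E lC0.
    by exists l => //; rewrite /upd (negbTE lv).
  + move=> /hasPn Hn.
    apply: (proj1 (proj2 MG)); exists (upd f x.1 x.2) => C CG.
    case: (boolP (x.1 \in vars_of C)) => [vC|nvC]; last exact: sat_upd (Hf _ (DP_kept CG nvC)) nvC.
    case: (varx _ CG vC) => [->|xC]; first by exists x; rewrite // /upd eqxx.
    have [_ RD _ _ _] := RF _ CG xC.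
    have [l lR fl] := Hf _ RD.
    move: lR; rewrite !inE negb_or => /andP [/andP [lx lcx] /orP [lC|lC]].
    * by move: (Hn l lC); rewrite lx fl eqxx.
    * have lv : l.1 != x.1 by apply/negP => /eqP /lit_var_cases; rewrite (negbTE lx) (negbTE lcx).
      by exists l => //; rewrite /upd (negbTE lv).
- move=> G' /[dup] /fproper_sub sub; rewrite fproperE => /andP [_ /fsubsetPn [E ED EG']].
  suff [f Hf] : exists f, forall C, C \in DP x.1 G -> C != E -> sat_clause f C.
    exists f => C CG'; apply: Hf; first by move/fsubsetP: sub; apply.
    by apply/negP => /eqP CE; move: EG'; rewrite -CE CG'.
  case: (DPc _ ED) => [[EG nvE]|[D [DG xD] ->]].
  + have [f [Hf _]] := crit MG EG.
    exists f => C CD CE; case: (DPc _ CD) => [[CG _]|[D [DG xD] ->]]; first exact: Hf.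
    apply: res_sat => //; try exact: cG.
    * apply: Hf => //; apply/negP => /eqP E0; move: nvE; rewrite -E0 => /negP; apply; apply/varsxP; by left.
    * apply: Hf => //; apply/negP => /eqP E0; move: nvE; rewrite -E0 => /negP; apply; apply/varsxP; by right.
  + have [f [Hf Hn Hc fx]] := crit_x MG C0G xC0 uC0 DG xD.
    exists f => C CD CE; case: (DPc _ CD) => [[CG nvC]|[D' [D'G xD'] EC]].
    * apply: Hf => //; apply/negP => /eqP E0; move: nvC; rewrite E0 => /negP; apply; apply/varsxP; by right.
    * have D'D : D' != D by apply/negP => /eqP E0; move: CE; rewrite EC E0 eqxx.
      have [l lD' fl] := Hf _ D'G D'D.
      have lcx : l != compl x by apply/negP => /eqP El; move: fl; rewrite El fx /=; case: (x.2).
      have lx : l != x.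
        apply/negP => /eqP El; have /is_clauseP cD' := cG _ D'G.
        by move: (cD' _ lD'); rewrite El xD'.
      by rewrite EC; exists l; rewrite // !inE (negbTE lx) (negbTE lcx) lD' orbT.
Qed.

Lemma card_disjU (T : choiceType) (A B : {fset T}) :
  (forall e, e \in A -> e \in B -> False) -> #|` A `|` B| = (#|` A| + #|` B|)%N.
Proof.
move=> H; rewrite -cardfsUI.
have -> : A `&` B = fset0.
  apply/fsetP => e; rewrite !inE; apply/negP => /andP [eA eB]; exact: H eA eB.
by rewrite cardfs0 addn0.
Qed.

Lemma struct (G : cls) x : MU G -> ldeg G x = 1 -> exists C0,
  [/\ C0 \in G, x \in C0, (forall E, E \in G -> x \in E -> E = C0),
      (forall D w, D \in G -> compl x \in D -> w \in C0 -> compl w \in D -> w = x) &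
      (forall z, z.1 != x.1 -> exists o d, [/\ ldeg G z = (o + (z \in C0) + d)%N,
          ldeg (DP x.1 G) z = (o + (if z \in C0 then ldeg G (compl x) else d))%N,
          d <= ldeg G (compl x),
          (0 < d -> exists2 D, D \in G & (compl x \in D) && (z \in D)) &
          (o = 0 -> forall E, E \in G -> z \in E -> E = C0 \/ compl x \in E)])].
Proof.
move=> MG /unique1 [C0 [C0G xC0 uC0]].
have /is_clause_setP cG := proj1 MG.
have RF := res_facts MG C0G xC0 uC0.
have DPc := DP_char C0G xC0 uC0.
exists C0; split => //; first exact: F1.
move=> z zx; have [zx1 zx2] := var_ne zx.
pose Ok := [fset E in G | (z \in E) && (x.1 \notin vars_of E)].
pose Ox := [fset E in G | (z \in E) && (x \in E)].
pose Od := [fset E in G | (z \in E) && (compl x \in E)].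
pose R_ := fun D : clause => (C0 `|` D) `\` [fset x; compl x].
pose Dom := [fset D in G | (compl x \in D) && (z \in R_ D)].
exists #|` Ok|, #|` Od|; split.
- rewrite /ldeg; have -> : [fset E in G | z \in E] = Ok `|` Ox `|` Od.
    apply/fsetP => E; rewrite !inE.
    case EG : (E \in G) => //=; case zE : (z \in E) => //=.
    case: (boolP (x.1 \in vars_of E)) => //= /varsxP [->|->] //; by rewrite orbT.
  rewrite card_disjU; last first.
    move=> E; rewrite !inE => /orP [/and3P [EG zE /negP nv]|/and3P [EG zE xE]] /and3P [_ _ cxE].
    + by apply: nv; apply/varsxP; right.
    + by have /is_clauseP cE := cG _ EG; move: (cE _ xE); rewrite cxE.
  rewrite card_disjU; last first.
    move=> E; rewrite !inE => /and3P [EG zE /negP nv] /and3P [_ _ xE].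
    by apply: nv; apply/varsxP; left.
  congr (_ + _ + _)%N.
  case: (boolP (z \in C0)) => zC0.
  + have -> : Ox = [fset C0] by apply/fsetP => E; rewrite !inE; apply/and3P/eqP => [[EG _ xE]|->];
      [exact: uC0 | by rewrite C0G zC0 xC0].
    by rewrite cardfs1.
  + have -> : Ox = fset0.
      apply/fsetP => E; rewrite !inE; apply/negP => /and3P [EG zE xE].
      by move: zC0; rewrite -(uC0 _ EG xE) zE.
    by rewrite cardfs0.
- rewrite {1}/ldeg; have -> : [fset E in DP x.1 G | z \in E] = Ok `|` (R_ @` Dom).
    apply/fsetP => E; rewrite memF in_fsetU; apply/andP/orP.
    + case=> /DPc [[EG nvE]|[D [DG xD] EE]] zE; first by left; rewrite !inE EG zE nvE.
      right; apply/imfsetP; exists D => //; rewrite !inE DG xD /=.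
      by move: zE; rewrite EE !inE.
    + case=> [H0|/imfsetP [D]]; first by rewrite !inE in H0; case/and3P: H0 => EG zE nvE; split => //; apply: DP_kept.
      move=> H0; rewrite !inE in H0; case/and3P: H0 => DG xD zR ->.
      have [_ RD _ _ _] := RF _ DG xD; split => //; by rewrite /R_ !inE.
  rewrite card_disjU; last first.
    move=> E; rewrite !inE => /and3P [EG _ _] /imfsetP [D]; rewrite !inE => /and3P [DG xD _] EE.
    have [_ _ RnG _ _] := RF _ DG xD; by move: RnG; rewrite -/(R_ D) -EE EG.
  rewrite [#|` R_ @` Dom|]card_in_imfset /=; last first.
    move=> D1 D2; rewrite !inE => /and3P [D1G xD1 _] /and3P [D2G xD2 _] E.
    have [_ _ _ inj _] := RF _ D2G xD2; exact: inj.
  congr (_ + _)%N.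
  case: (boolP (z \in C0)) => zC0.
  + rewrite /ldeg; congr (#|` _|); apply/fsetP => D; rewrite !inE.
    case DG : (D \in G) => //=; case xD : (compl x \in D) => //=.
    by rewrite zx1 zx2 zC0.
  + congr (#|` _|); apply/fsetP => D; rewrite !inE.
    case DG : (D \in G) => //=; case xD : (compl x \in D) => //=; last by rewrite andbF.
    by rewrite zx1 zx2 (negbTE zC0) andbT.
- apply: fsubset_leq_card; apply/fsubsetP => E; rewrite !inE => /and3P [-> _ ->] //.
- rewrite cardfs_gt0 => /fset0Pn [D]; rewrite !inE => /and3P [DG zD xD].
  by exists D => //; rewrite xD zD.
- move=> /cardfs0_eq O0 E EG zE.
  case: (boolP (x.1 \in vars_of E)) => [/varsxP [xE|cxE]|nv]; [left; exact: uC0|by right|].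
  have : E \in Ok by rewrite !inE EG zE nv.
  by rewrite O0 inE.
Qed.

Lemma vdeg_lit (H : cls) (z : lit) : vdeg H z.1 = (ldeg H z + ldeg H (compl z))%N.
Proof. case: z => v [] //=; by rewrite /vdeg addnC. Qed.

Lemma sing_of (H : cls) (z : lit) : ldeg H z = 1 -> 0 < ldeg H (compl z) -> singular H z.1.
Proof.
move=> h1 h2; case: z h1 h2 => v [] /= h1 h2; rewrite /singular h1.
- by rewrite /minn; case: ifP => //; case: (ldeg _ _) h2 => [|[|]].
- rewrite /minn; case: ifP => //.  move: h2; rewrite /compl /=. by case: (ldeg _ _) => [|[|]].
Qed.

Lemma ldeg0_novar (H : cls) v z : (forall C, C \in H -> v \notin vars_of C) -> z.1 = v -> ldeg H z = 0.
Proof.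
move=> Hn zv; apply/eqP; rewrite cardfs_eq0; apply/eqP/fsetP => C; rewrite !inE.
apply/negP => /andP [CH zC]; move/negP: (Hn _ CH); apply; rewrite -zv; apply/varsxP; by left.
Qed.

Lemma not_sing_DP (H : cls) v : ~~ singular (DP v H) v.
Proof.
rewrite /singular (@ldeg0_novar _ v (pos v)) //; last by move=> C; apply: DP_novar.
by rewrite min0n.
Qed.

Ltac prune := repeat match goal with H : ?T |- _ => lazymatch T with
  | @eq nat _ _ => fail
  | is_true (leq _ _) => fail
  | _ => clear H end end.
Ltac clia := prune; lia.

Lemma core (G : cls) a b : MU G -> singular G a -> singular (DP a G) b ->
 (2 <= vdeg G a - 1 -> [/\ singular G b /\ singular (DP b G) a,
      vdeg G b - 1 <= (vdeg (DP a G) b - 1).+1,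
      (vdeg G a - 1).-1 <= vdeg (DP b G) a - 1,
      (vdeg (DP a G) b - 1 = 1 -> vdeg G b - 1 = 1) &
      (2 <= vdeg (DP a G) b - 1 -> 2 <= vdeg (DP b G) a - 1)]) /\
 (vdeg G a - 1 = 1 ->
   (vdeg (DP a G) b - 1 = 1 -> [/\ singular G b /\ singular (DP b G) a,
        vdeg (DP b G) a - 1 = 1 & (vdeg G b - 1 = 1 \/ vdeg G b - 1 = 2)]) /\
   (2 <= vdeg (DP a G) b - 1 -> (singular G b -> singular (DP b G) a) /\ 2 <= vdeg G b - 1)).
Proof.
move=> MG sa sb.
have ab : a != b by apply/eqP => E; subst b; move: sb; apply/negP/not_sing_DP.
have MG1 := MU_DP MG sa.
have [x [xa lx]] := sing_lit sa; subst a.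
have [C0 [C0G xC0 uC0 F1x STx]] := struct MG lx.
have [y [yb ly]] := sing_lit sb; subst b.
have /is_clause_setP cG := proj1 MG.
have yx : y.1 != x.1 by rewrite eq_sym.
rewrite !vdeg_lit lx ly.
have cx1 : ldeg G (compl x) >= 1 by apply: no_pure => //; rewrite lx.
have cy1 : ldeg (DP x.1 G) (compl y) >= 1 by apply: no_pure => //; rewrite ly.
split.
- move=> hm.
  have [o1 [d1 [Ey Ey1 dle1 _ _]]] := STx y yx.
  have yC0 : (y \in C0) = false by apply/negbTE/negP => yC0; move: Ey1; rewrite yC0 ly; clia.
  rewrite yC0 /= in Ey Ey1.
  have lyG : ldeg G y = 1 by clia.
  have cyG : ldeg G (compl y) >= 1 by apply: no_pure => //; rewrite lyG.
  have sGb := sing_of lyG cyG.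
  have MG' := MU_DP MG sGb.
  have [E0 [E0G yE0 uE0 F1y STy]] := struct MG lyG.
  have [o' [d' [Ex Ex' _ _ _]]] := STy x ab.
  have xE0 : (x \in E0) = false.
    apply/negbTE/negP => xE0; have E := uC0 _ E0G xE0; by move: yC0; rewrite -E yE0.
  rewrite xE0 /= in Ex Ex'.
  have lxG' : ldeg (DP y.1 G) x = 1 by clia.
  have cxG' : ldeg (DP y.1 G) (compl x) >= 1 by apply: no_pure => //; rewrite lxG'.
  have sG'a := sing_of lxG' cxG'.
  have [o2 [d2 [Ec Ec1 dle2 _ _]]] := STx (compl y) yx.
  have [o3 [d3 [Ed Ed' dle3 _ _]]] := STy (compl x) ab.
  split.
  + by [].
  + case: (compl y \in C0) Ec Ec1 => /= Ec Ec1; clia.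
  + case: (compl x \in E0) Ed Ed' => /= Ed Ed'; clia.
  + case: (compl y \in C0) Ec Ec1 => /= Ec Ec1; clia.
  + move=> hm2.
    case cxE0 : (compl x \in E0) Ed Ed' => /= Ed Ed'; last by clia.
    case cyC0 : (compl y \in C0) Ec Ec1 => /= Ec Ec1; last by clia.
    suff : ldeg G (compl y) <> 1 by clia.
    move=> _; have : compl y = x.
      apply: (F1x E0 (compl y)) => //; by rewrite complK.
    move=> E; move: yx; by rewrite -E /= eqxx.
- move=> hm1.
  have mx1 : ldeg G (compl x) = 1 by clia.
  have [D0 [D0G cxD0 uD0]] := unique1 mx1.
  have MGy : forall y0 : lit, y0.1 = y.1 -> MU (DP y0.1 G) -> MU (DP y.1 G) by move=> y0 ->.
  split.
  + move=> hm2.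
    have cy1' : ldeg (DP x.1 G) (compl y) = 1 by clia.
    have key : forall y0 : lit, y0.1 = y.1 -> ldeg (DP x.1 G) y0 = 1 ->
        ldeg (DP x.1 G) (compl y0) = 1 -> (y0 \in C0) = false ->
        [/\ singular G y.1 /\ singular (DP y.1 G) x.1, ldeg (DP y.1 G) x = 1,
            ldeg (DP y.1 G) (compl x) = 1, ldeg G y0 = 1 &
            (ldeg G (compl y0) = 1 \/ ldeg G (compl y0) = 2)].
      move=> y0 y0b l1 l2 y0C0.
      have y0x : y0.1 != x.1 by rewrite y0b.
      have [o1 [d1 [Ey Ey1 dle1 _ _]]] := STx y0 y0x.
      rewrite y0C0 /= in Ey Ey1.
      have lyG : ldeg G y0 = 1 by clia.
      have [o2 [d2 [Ec Ec1 dle2 dex2 _]]] := STx (compl y0) y0x.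
      have p12 : ldeg G (compl y0) = 1 \/ ldeg G (compl y0) = 2.
        by case: (compl y0 \in C0) Ec Ec1 => /= Ec Ec1; clia.
      have cyG : 0 < ldeg G (compl y0) by clia.
      have sGb := sing_of lyG cyG; rewrite y0b in sGb.
      have [E0 [E0G yE0 uE0 F1y STy]] := struct MG lyG.
      have MG' : MU (DP y.1 G) := MU_DP MG sGb.
      have xy0 : x.1 != y0.1 by rewrite y0b.
      have p1 : forall z, z \in E0 -> (z == x) || (z == compl x) -> ldeg G (compl y0) = 1.
        move=> z zE0 zx; case: p12 => // p2; exfalso.
        case c2 : (compl y0 \in C0) Ec Ec1 => /= Ec Ec1; last by clia.
        have [|D DG /andP [cxD cyD]] := dex2; first by clia.
        case/orP: zx => /eqP Ez; subst z.
        * by move: y0C0; rewrite -(uC0 _ E0G zE0) yE0.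
        * have E1 := uD0 _ E0G zE0; have E2 := uD0 _ DG cxD; subst E0 D.
          have /is_clauseP cD := cG _ DG. by move: (cD _ yE0); rewrite cyD.
      have l1' : forall z, (z == x) || (z == compl x) -> ldeg G z = 1 -> ldeg (DP y.1 G) z = 1.
        move=> z zx lz.
        have zy : z.1 != y0.1 by case/orP: zx => /eqP ->.
        have [o' [d' [Ez Ez' _ _ _]]] := STy z zy.
        rewrite y0b in Ez'.
        case zE0 : (z \in E0) Ez Ez' => /= Ez Ez'; last by clia.
        have := p1 z zE0 zx; clia.
      have lx' := l1' x ltac:(by rewrite eqxx) lx.
      have lcx' := l1' (compl x) ltac:(by rewrite eqxx orbT) mx1.
      split => //; split => //.
      apply: (sing_of lx'); by rewrite lcx'.
    case yC0 : (y \in C0).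
    * have cyC0 : (compl y \in C0) = false.
        have /is_clauseP cC0 := cG _ C0G; by apply/negbTE; apply: cC0.
      have [A1 A2 A3 A4 A5] := key (compl y) erefl cy1' ltac:(by rewrite complK) cyC0.
      rewrite complK in A5.
      split => //; first by clia.
      case: A5 => A5; [left|right]; clia.
    * have [A1 A2 A3 A4 A5] := key y erefl ly cy1' yC0.
      split => //; first by clia.
      case: A5 => A5; [left|right]; clia.
  + move=> hm2; split.
    * move=> sGb; have [y0 [y0b ly0]] := sing_lit sGb.
      have [E0 [E0G yE0 uE0 F1y STy]] := struct MG ly0.
      have MG' := MU_DP MG sGb.
      have l1' : forall z, (z == x) || (z == compl x) -> ldeg G z = 1 -> (z \in E0) = false ->
          ldeg (DP y.1 G) z = 1.
        move=> z zx lz zE0.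
        have zy : z.1 != y0.1 by case/orP: zx => /eqP ->; rewrite y0b.
        have [o' [d' [Ez Ez' _ _ _]]] := STy z zy.
        rewrite y0b zE0 /= in Ez'; rewrite zE0 /= in Ez; clia.
      case xE0 : (x \in E0).
      - have cxE0 : (compl x \in E0) = false.
          have /is_clauseP cE0 := cG _ E0G; by apply/negbTE; apply: cE0.
        have l2 := l1' (compl x) ltac:(by rewrite eqxx orbT) mx1 cxE0.
        have h : 0 < ldeg (DP y.1 G) (compl (compl x)) by apply: no_pure => //; rewrite l2.
        exact: (sing_of l2 h).
      - have l2 := l1' x ltac:(by rewrite eqxx) lx xE0.
        apply: (sing_of l2); apply: no_pure => //; by rewrite l2.
    * have [o1 [d1 [Ey Ey1 _ _ _]]] := STx y yx.
      have [o2 [d2 [Ec Ec1 dle2 _ _]]] := STx (compl y) yx.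
      rewrite mx1 in Ey1 Ec1 dle2.
      case: (y \in C0) Ey Ey1 => /= Ey Ey1;
      case: (compl y \in C0) Ec Ec1 => /= Ec Ec1; clia.
Qed.

Lemma DPs_cat l1 l2 F : DPs (l1 ++ l2) F = DPs l2 (DPs l1 F).
Proof. by rewrite /DPs foldl_cat. Qed.

Lemma DPs_rcons l v F : DPs (rcons l v) F = DP v (DPs l F).
Proof. by rewrite /DPs foldl_rcons. Qed.

Lemma s_split (s : seq var) i : i.+1 < size s ->
  s = take i s ++ nth 0 s i :: nth 0 s i.+1 :: drop i.+2 s.
Proof.
move=> h; rewrite -{1}(cat_take_drop i s).
have h1 : i < size s by lia.
by rewrite (drop_nth 0 h1) (drop_nth 0 h).
Qed.

Lemma perm_gen (P T : seq nat) (a b : nat) : 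
  permute (swap_idx (size P)) (P ++ a :: b :: T) = P ++ b :: a :: T.
Proof.
apply: (@eq_from_nth _ 0); first by rewrite size_mkseq !size_cat.
rewrite size_mkseq => j hj; rewrite nth_mkseq // /swap_idx.
have e1 : ((size P).+1 < size P) = false by lia.
case: eqP => [->|ji]; first by rewrite !nth_cat ltnn subnn e1 subSnn.
case: eqP => [->|ji1]; first by rewrite !nth_cat ltnn subnn e1 subSnn.
rewrite !nth_cat; case: ltnP => // hP.
have ji2 : j != size P by apply/eqP.
have ji3 : j != (size P).+1 by apply/eqP.
clear ji ji1 e1.
have : j - size P >= 2 by lia.
by case: (j - size P) => [|[|k]].
Qed.

Lemma MU_prefix F (s : seq var) : MU F -> singular_tuple F s ->
  forall k, k <= size s -> MU (DPs (take k s) F).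
Proof.
move=> MF st; elim=> [|k IH] hk; first by rewrite take0.
rewrite (take_nth 0) // DPs_rcons; apply: MU_DP; first by apply: IH; lia.
exact: st.
Qed.

Lemma take_split (P T : seq nat) x y j : size P <= j ->
  take j.+2 (P ++ x :: y :: T) = P ++ x :: y :: take (j - size P) T.
Proof.
move=> h; rewrite take_cat.
have -> : (j.+2 < size P) = false by lia.
have -> : j.+2 - size P = (j - size P).+2 by lia.
by [].
Qed.

Theorem theorem41 (F : cls) (s : seq var) (i : nat) :
  MU F -> singular_tuple F s -> 2 <= size s -> i.+1 < size s ->
  let n := size s in
  let s' := permute (swap_idx i) s in
  let m := sdeg F s in
  let m' := sdeg F s' in
  (* 1 *)
  (sing_preserving F s (swap_idx i) ->
     forall j, j < n -> j != i -> j != i.+1 -> m' j = m j) /\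
  (* 2 *)
  (2 <= m i ->
     [/\ sing_preserving F s (swap_idx i),
         m' i <= (m i.+1).+1,
         (m i).-1 <= m' i.+1,
         (m i.+1 = 1 -> m' i = 1) &
         (2 <= m i.+1 -> 2 <= m' i.+1)]) /\
  (* 3 *)
  (m i = 1 ->
     (m i.+1 = 1 ->
        [/\ sing_preserving F s (swap_idx i), m' i.+1 = 1 & (m' i = 1 \/ m' i = 2)]) /\
     (2 <= m i.+1 ->
        (sing_preserving F s (swap_idx i) <->
           singular (DPs (take i s) F) (nth 0 s i.+1)) /\
        (sing_preserving F s (swap_idx i) -> 2 <= m' i))).

Proof.
move=> MF st _ hi n s' m m'.
have hi1 : i < size s by lia.
pose P := take i s; pose T := drop i.+2 s; pose a := nth 0 s i; pose b := nth 0 s i.+1.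
have sE : s = P ++ a :: b :: T := s_split hi.
have sP : size P = i by rewrite size_take hi1.
have s'E : s' = P ++ b :: a :: T.
  rewrite /s' {1}sE -{1}sP; exact: perm_gen.
pose G := DPs P F.
have MG : MU G := MU_prefix MF st (ltnW hi1).
have sa : singular G a := st i hi1.
have sb : singular (DP a G) b.
  have := st i.+1 hi; by rewrite (take_nth 0 hi1) DPs_rcons.
have ab : a != b by apply/eqP => E; move: sb; rewrite E; apply/negP/not_sing_DP.
have cG := proj1 MG.
have mi : m i = vdeg G a - 1 by [].
have mi1 : m i.+1 = vdeg (DP a G) b - 1 by rewrite /m /sdeg (take_nth 0 hi1) DPs_rcons.
have ss' : size s' = size s by rewrite /s' /permute size_mkseq.
have take_s' : forall j, j <= i -> take j s' = take j s.
  move=> j hj; rewrite s'E sE !take_cat sP.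
  by case: ltnP => // h; have -> : j - i = 0 by lia.
have nth_s' : forall j, j != i -> j != i.+1 -> nth 0 s' j = nth 0 s j.
  move=> j h1 h2; rewrite s'E sE !nth_cat sP; case: ltnP => // h.
  have : j - i >= 2 by lia.
  by case: (j - i) => [|[|k]].
have m'i : m' i = vdeg G b - 1.
  rewrite /m' /sdeg take_s' // s'E nth_cat sP ltnn subnn //.
have m'i1 : m' i.+1 = vdeg (DP b G) a - 1.
  rewrite /m' /sdeg s'E take_cat nth_cat sP.
  have -> : (i.+1 < i) = false by lia.
  by rewrite subSnn DPs_cat.
have takeH : forall j, i.+2 <= j ->
    DPs (take j s') F = DPs (take (j - i.+2) T) (DP a (DP b G)) /\
    DPs (take j s) F = DPs (take (j - i.+2) T) (DP b (DP a G)).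
  move=> j hj; have -> : j = (j - 2).+2 by lia.
  rewrite s'E sE !take_split sP; try lia.
  have -> : j - 2 - i = (j - 2).+2 - i.+2 by lia.
  by rewrite !DPs_cat.
have comm : singular G b -> DP a (DP b G) = DP b (DP a G).
  by move=> sGb; apply: DP_comm.
have spE : sing_preserving F s (swap_idx i) <-> singular G b /\ singular (DP b G) a.
  split.
  - move=> sp; have sp' : singular_tuple F s' := sp.
    have h1 := sp' i ltac:(by rewrite ss').
    have h2 := sp' i.+1 ltac:(by rewrite ss').
    rewrite take_s' // s'E nth_cat sP ltnn subnn /= in h1.
    move: h2; rewrite s'E take_cat nth_cat sP.
    have -> : (i.+1 < i) = false by lia.
    by rewrite subSnn DPs_cat.
  - move=> [sGb sG'a] j; rewrite -/s' ss' => hj.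
    case: (ltnP j i) => h.
    + rewrite take_s' ?nth_s' //; try lia; exact: st.
    + case: (eqVneq j i) => [->|ji].
      * by rewrite take_s' // s'E nth_cat sP ltnn subnn.
      case: (eqVneq j i.+1) => [->|ji1].
      * rewrite s'E take_cat nth_cat sP.
        have -> : (i.+1 < i) = false by lia.
        by rewrite subSnn DPs_cat.
      * have h2 : i.+2 <= j by lia.
        rewrite nth_s' //; have [E1 E2] := takeH j h2; rewrite E1 comm // -E2; exact: st.
have [C2 C3] := core MG sa sb.
split; [|split].
- move=> /spE [sGb _] j hj ji ji1.
  case: (ltnP j i) => h.
  + by rewrite /m' /m /sdeg take_s' ?nth_s' //; apply: ltnW.
  + have h2 : i.+2 <= j by lia.
    rewrite /m' /m /sdeg nth_s' //; have [E1 E2] := takeH j h2; by rewrite E1 E2 comm.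
- move=> h2; rewrite mi in h2; have [[sGb sG'a] B C D E] := C2 h2.
  rewrite m'i m'i1 mi mi1; split => //; by apply/spE.
- move=> h1; rewrite mi in h1; have [D1 D2] := C3 h1.
  rewrite m'i m'i1 mi1; split.
  + move=> h3; have [[sGb sG'a] B C] := D1 h3; split => //; by apply/spE.
  + move=> h3; have [D3 D4] := D2 h3; split.
    * split; first by case/spE.
      by move=> sGb; apply/spE; split => //; apply: D3.
    * by move=> _.
Qed.
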